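(* Let $G=(U,V,E)$ be a finite bipartite graph, $F\subseteq E$, and let $(E_r,E_b)$ be an $(A,B,C)$-free bipartition of the set $E_c$ of committed edges of $G$. Let $G-F=(U,V,E\setminus F)$. Then there are no alternating cycles of $E_r$ relative to $G-F$.
   Context: $\hat{E}=\{uv: u\in U,\ v\in V,\ uv\notin E\}$. Two edges $u_1v_1,u_2v_2\in E$ ($u_i\in U$, $v_i\in V$) are in conflict in $G$ if $u_1v_2\notin E$ and $u_2v_1\notin E$. An edge is committed if it is in conflict with some other edge of $E$. A bipartition of $E_c$ is a pair $(E_r,E_b)$ with $E_r\cap E_b=\emptyset$, $E_r\cup E_b=E_c$, $F\cap E_c\subseteq E_b$. It is $(A,B,C)$-free if there are no $u_1,u_2\in U$, $v_1,v_2\in V$ forming: $(A_1)$: $u_1v_1,u_2v_2\in E_r$, $u_1v_2,u_2v_1\in\hat{E}$; $(A_2)$: $u_1v_1,u_2v_2\in E_b$, $u_1v_2,u_2v_1\in\hat{E}$; $(B_1)$: $u_1v_1,u_2v_2\in E_r$, $u_1v_2\in\hat{E}$, $u_2v_1\in E_b$; $(B_2)$: $u_1v_1,u_2v_2\in E_b$, $u_1v_2\in\hat{E}$, $u_2v_1\in E_r$; $(C)$: $u_1v_1,u_2v_2\in E_r$, $u_1v_2\in\hat{E}$, $u_2v_1\in F$. For a bipartite graph $H=(U,V,E_H)$, $M\subseteq E_H$ and $k\ge2$, an alternating cycle of $M$ relative to $H$ is a set of $k$ distinct vertices $u_0,\dots,u_{k-1}\in U$ and $k$ distinct vertices $v_0,\dots,v_{k-1}\in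 V$ with $u_iv_i\notin E_H$ and $u_{i+1}v_i\in M$ for all $0\le i<k$ (indices modulo $k$). *)

(* Defs.v *)
From mathcomp Require Import all_boot.
Set Implicit Arguments. Unset Strict Implicit. Unset Printing Implicit Defensive.

(* A finite bipartite graph G = (U, V, E) is given by two finTypes U, V
   (the two vertex classes) and an edge set E : {set U * V}. *)

Section Defs.
Variables U V : finType.

Definition in_conflict (E : {set U * V}) (e1 e2 : U * V) : bool :=
  [&& e1 \in E, e2 \in E, (e1.1, e2.2) \notin E & (e2.1, e1.2) \notin E].

Definition committed (E : {set U * V}) : {set U * V} :=
  [set e in E | [exists e', in_conflict E e e']].

Definition is_bipartition (E F Er Eb : {set U * V}) : Prop :=
  [/\ Er :&: Eb = set0, Er :|: Eb = committed E & F :&: committed E \subset Eb].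

Definition ABC_free (E F Er Eb : {set U * V}) : Prop :=
  forall (u1 u2 : U) (v1 v2 : V),
    ~ ( [/\ (u1, v1) \in Er, (u2, v2) \in Er,
                       (u1, v2) \notin E & (u2, v1) \notin E] \/
          [/\ (u1, v1) \in Eb, (u2, v2) \in Eb,
                       (u1, v2) \notin E & (u2, v1) \notin E] \/
          [/\ (u1, v1) \in Er, (u2, v2) \in Er,
                       (u1, v2) \notin E & (u2, v1) \in Eb] \/
          [/\ (u1, v1) \in Eb, (u2, v2) \in Eb,
                       (u1, v2) \notin E & (u2, v1) \in Er] \/
          [/\ (u1, v1) \in Er, (u2, v2) \in Er,
                       (u1, v2) \notin E & (u2, v1) \in F]).

Definition alternating_cycle (EH M : {set U * V}) : Prop :=
  exists (k : nat) (us : 'I_k -> U) (vs : 'I_k -> V),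
    [/\ 2 <= k, injective us, injective vs &
        forall i : 'I_k, (us i, vs i) \notin EH /\ (us (ordS i), vs i) \in M].

End Defs.

(* Main.v *)
Require Import Defs.
From mathcomp Require Import all_boot.
Set Implicit Arguments. Unset Strict Implicit. Unset Printing Implicit Defensive.

Lemma conf_comm (U V : finType) (E : {set U * V}) e e' :
  in_conflict E e e' -> e \in committed E.
Proof.
move=> h; rewrite inE; apply/andP; split; first by case/and4P: h.
by apply/existsP; exists e'.
Qed.

Lemma conf_sym (U V : finType) (E : {set U * V}) e e' :
  in_conflict E e e' -> in_conflict E e' e.
Proof. by case/and4P=> h1 h2 h3 h4; apply/and4P. Qed.

Lemma mkconf (U V : finType) (E : {set U * V}) u1 u2 v1 v2 :
  (u1, v1) \in E -> (u2, v2) \in E -> (u1, v2) \notin E -> (u2, v1) \notin E ->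
  in_conflict E (u1, v1) (u2, v2).
Proof. by move=> *; apply/and4P. Qed.

Lemma comm_E (U V : finType) (E : {set U * V}) e : e \in committed E -> e \in E.
Proof. by rewrite inE => /andP []. Qed.


Lemma comm_RB (U V : finType) (E F Er Eb : {set U * V}) e :
  is_bipartition E F Er Eb -> e \in committed E -> e \in Er \/ e \in Eb.
Proof. by case=> _ h _; rewrite -h inE => /orP. Qed.

Lemma R_comm (U V : finType) (E F Er Eb : {set U * V}) e :
  is_bipartition E F Er Eb -> e \in Er -> e \in committed E.
Proof. by case=> _ h _; rewrite -h inE => ->. Qed.

Lemma B_comm (U V : finType) (E F Er Eb : {set U * V}) e :
  is_bipartition E F Er Eb -> e \in Eb -> e \in committed E.
Proof. by case=> _ h _; rewrite -h inE => ->; rewrite orbT. Qed.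

Lemma RnB (U V : finType) (E F Er Eb : {set U * V}) e :
  is_bipartition E F Er Eb -> e \in Er -> e \in Eb -> False.
Proof.
case=> h _ _ h1 h2.
have : e \in Er :&: Eb by rewrite inE h1 h2.
by rewrite h inE.
Qed.

Lemma RnF (U V : finType) (E F Er Eb : {set U * V}) e :
  is_bipartition E F Er Eb -> e \in Er -> e \in F -> False.
Proof.
move=> hb h1 h2; have hc := R_comm hb h1; apply: (RnB hb h1).
case: hb => _ _ /subsetP; apply; by rewrite inE h2 hc.
Qed.

Lemma abcA1 (U V : finType) (E F Er Eb : {set U * V}) :
  ABC_free E F Er Eb -> forall u1 u2 v1 v2,
  (u1,v1) \in Er -> (u2,v2) \in Er -> (u1,v2) \notin E -> (u2,v1) \notin E -> False.
Proof. by move=> ha u1 u2 v1 v2 *; apply: (ha u1 u2 v1 v2); left; split. Qed.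
Lemma abcA2 (U V : finType) (E F Er Eb : {set U * V}) :
  ABC_free E F Er Eb -> forall u1 u2 v1 v2,
  (u1,v1) \in Eb -> (u2,v2) \in Eb -> (u1,v2) \notin E -> (u2,v1) \notin E -> False.
Proof. by move=> ha u1 u2 v1 v2 *; apply: (ha u1 u2 v1 v2); right; left; split. Qed.
Lemma abcB1 (U V : finType) (E F Er Eb : {set U * V}) :
  ABC_free E F Er Eb -> forall u1 u2 v1 v2,
  (u1,v1) \in Er -> (u2,v2) \in Er -> (u1,v2) \notin E -> (u2,v1) \in Eb -> False.
Proof. by move=> ha u1 u2 v1 v2 *; apply: (ha u1 u2 v1 v2); right; right; left; split. Qed.
Lemma abcC (U V : finType) (E F Er Eb : {set U * V}) :
  ABC_free E F Er Eb -> forall u1 u2 v1 v2,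
  (u1,v1) \in Er -> (u2,v2) \in Er -> (u1,v2) \notin E -> (u2,v1) \in F -> False.
Proof. by move=> ha u1 u2 v1 v2 *; apply: (ha u1 u2 v1 v2); right; right; right; right; split. Qed.

Lemma R_E (U V : finType) (E F Er Eb : {set U * V}) e :
  is_bipartition E F Er Eb -> e \in Er -> e \in E.
Proof. by move=> hb h; apply: comm_E; apply: R_comm hb h. Qed.
Lemma B_E (U V : finType) (E F Er Eb : {set U * V}) e :
  is_bipartition E F Er Eb -> e \in Eb -> e \in E.
Proof. by move=> hb h; apply: comm_E; apply: B_comm hb h. Qed.

Lemma partner (U V : finType) (E F Er Eb : {set U * V}) u v :
  is_bipartition E F Er Eb -> ABC_free E F Er Eb -> (u, v) \in Er ->
  exists x y, [/\ (x, y) \in Eb, (u, y) \notin E & (x, v) \notin E].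
Proof.
move=> hb ha h; have := R_comm hb h; rewrite inE => /andP [_ /existsP [[x y] hc]].
exists x, y; case/and4P: (hc) => /= _ _ h1 h2; split=> //.
case: (comm_RB hb (conf_comm (conf_sym hc))) => // hR.
by case: (abcA1 ha h hR h1 h2).
Qed.

Lemma half (U V : finType) (E F Er Eb : {set U * V}) u1 u2 v1 w x y :
  is_bipartition E F Er Eb -> ABC_free E F Er Eb ->
  (u1,v1) \in Er -> (u2,v1) \in E -> (u2,v1) \notin Er -> (x,y) \in Eb ->
  (u1,y) \notin E -> (x,v1) \notin E -> (u2,w) \notin E -> (u1,w) \in E ->
  (u2,y) \in Er -> False.
Proof.
move=> hb ha R11 E21 nR21 Bxy nE1y nEx1 nE2w E1w R2y.
have E2y := R_E hb R2y.
have c1 := mkconf E1w E2y nE1y nE2w.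
have B1w : (u1, w) \in Eb.
  case: (comm_RB hb (conf_comm c1)) => // hR.
  by case: (abcA1 ha hR R2y nE1y nE2w).
have Exw : (x, w) \in E.
  case: (boolP ((x, w) \in E)) => // hn.
  by case: (abcA2 ha B1w Bxy nE1y hn).
have nB21 : (u2, v1) \notin Eb.
  by apply/negP => hB; apply: (abcB1 ha R11 R2y nE1y hB).
have c2 := mkconf E21 Exw nE2w nEx1.
by case: (comm_RB hb (conf_comm c2)) => h; [rewrite h in nR21 | rewrite h in nB21].
Qed.

Lemma L0 (U V : finType) (E F Er Eb : {set U * V}) u1 u2 v1 v2 :
  is_bipartition E F Er Eb -> ABC_free E F Er Eb ->
  (u1,v1) \in Er -> (u2,v2) \in Er -> (u1,v2) \in E -> (u2,v1) \in E ->
  (u1,v2) \notin Er -> (u2,v1) \notin Er -> False.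
Proof.
move=> hb ha R11 R22 E12 E21 nR12 nR21.
have [x [y [Bxy nE1y nEx1]]] := partner hb ha R11.
have [z [w [Bzw nE2w nEz2]]] := partner hb ha R22.
have E1w : (u1, w) \in E.
  case: (boolP ((u1, w) \in E)) => // hn.
  have c := mkconf E12 (B_E hb Bzw) hn nEz2.
  case: (comm_RB hb (conf_comm c)) => h; first by rewrite h in nR12.
  by case: (abcA2 ha h Bzw hn nEz2).
have E2y : (u2, y) \in E.
  case: (boolP ((u2, y) \in E)) => // hn.
  have c := mkconf E21 (B_E hb Bxy) hn nEx1.
  case: (comm_RB hb (conf_comm c)) => h; first by rewrite h in nR21.
  by case: (abcA2 ha h Bxy hn nEx1).
have c1 := mkconf E1w E2y nE1y nE2w.
case: (boolP ((u2, y) \in Er)) => hR.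
  exact: (half hb ha R11 E21 nR21 Bxy nE1y nEx1 nE2w E1w hR).
have B2y : (u2, y) \in Eb.
  by case: (comm_RB hb (conf_comm (conf_sym c1))) => // h; rewrite h in hR.
have R1w : (u1, w) \in Er.
  case: (comm_RB hb (conf_comm c1)) => // h.
  by case: (abcA2 ha h B2y nE1y nE2w).
exact: (half hb ha R22 E12 nR12 Bzw nE2w nEz2 nE1y E2y R1w).
Qed.

Lemma Glem (U V : finType) (E F Er Eb : {set U * V}) a1 a2 b1 b2 :
  F \subset E -> is_bipartition E F Er Eb -> ABC_free E F Er Eb ->
  (a1,b1) \in Er -> (a2,b2) \in Er -> (a2,b1) \in F -> (a1,b2) \in Er.
Proof.
move=> hF hb ha R1 R2 F21.
case: (boolP ((a1, b2) \in E)) => hE; last by case: (abcC ha R1 R2 hE F21).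
case: (boolP ((a1, b2) \in Er)) => // hn.
have E21 : (a2, b1) \in E by apply: (subsetP hF).
have nR21 : (a2, b1) \notin Er by apply/negP => h; apply: (RnF hb h F21).
by case: (L0 hb ha R1 R2 hE E21 hn nR21).
Qed.

Lemma F1 (U V : finType) (E F Er Eb : {set U * V}) a1 a2 b1 b2 :
  ABC_free E F Er Eb ->
  (a1,b1) \in Er -> (a2,b2) \in Er -> (a1,b2) \notin E ->
  [/\ (a2,b1) \in E, (a2,b1) \notin Eb & (a2,b1) \notin F].
Proof.
move=> ha R1 R2 nE; split.
- by case: (boolP ((a2, b1) \in E)) => // hn; case: (abcA1 ha R1 R2 nE hn).
- by apply/negP => h; apply: (abcB1 ha R1 R2 nE h).
- by apply/negP => h; apply: (abcC ha R1 R2 nE h).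
Qed.

Lemma nowalk (U V : finType) (E F Er Eb : {set U * V}) :
  F \subset E -> is_bipartition E F Er Eb -> ABC_free E F Er Eb ->
  forall n (s : seq (U * V)), size s <= n -> 0 < size s ->
  all (fun p => p \notin E :\: F) s -> cycle (fun p q => (q.1, p.2) \in Er) s -> False.
Proof.
move=> hF hb ha.
have RH : forall u v, (u, v) \in Er -> (u, v) \in E :\: F.
  move=> u v h; rewrite inE (R_E hb h) andbT; apply/negP => hf; exact: (RnF hb h hf).
have nHF : forall u v, (u, v) \notin E :\: F -> (u, v) \in E -> (u, v) \in F.
  move=> u v h hE; apply/negPn/negP => hf; by move: h; rewrite inE hf hE.
elim=> [|n IH] [|[u0 v0] [|[u1 v1] [|[u2 v2] [|[u3 v3] t]]]] //= hs _ hall hcyc.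
- by case/andP: hcyc => h _; move: hall => /andP [hn _]; rewrite RH in hn.
- case/and3P: hcyc => R10 R01 _; case/and3P: hall => n00 n11 _.
  case: (boolP ((u1, v1) \in E)) => E11.
    have := Glem hF hb ha R01 R10 (nHF _ _ n11 E11) => h.
    by rewrite RH in n00.
  have [E00 _ nF00] := F1 ha R10 R01 E11.
  by move: n00; rewrite inE E00 nF00.
- case/and4P: hcyc => R10 R21 R02 _; case/and4P: hall => n00 n11 n22 _.
  have nHn : forall u v, (u, v) \notin E -> (u, v) \notin E :\: F.
    by move=> u v h; rewrite inE (negbTE h) andbF.
  case: (boolP ((u1, v2) \in E)) => E12; last first.
    apply: (IH [:: (u0, v0); (u1, v2)]) => //=.
      by rewrite n00 nHn.
    by rewrite R10 R02.
  case: (boolP ((u1, v2) \in Er)) => R12.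
    apply: (IH [:: (u1, v1); (u2, v2)]) => //=.
      by rewrite n11 n22.
    by rewrite R21 R12.
  case: (boolP ((u0, v0) \in E)) => E00.
    by have := Glem hF hb ha R10 R02 (nHF _ _ n00 E00); rewrite (negbTE R12).
  have [_ nB12 _] := F1 ha R02 R10 E00.
  case: (boolP ((u1, v1) \in E)) => E11.
    have R20 := Glem hF hb ha R21 R10 (nHF _ _ n11 E11).
    apply: (IH [:: (u0, v0); (u2, v2)]) => //=.
      by rewrite n00 n22.
    by rewrite R20 R02.
  case: (boolP ((u2, v2) \in E)) => E22.
    have R01 := Glem hF hb ha R02 R21 (nHF _ _ n22 E22).
    apply: (IH [:: (u0, v0); (u1, v1)]) => //=.
      by rewrite n00 n11.
    by rewrite R10 R01.
  have c := mkconf E12 (R_E hb R21) E11 E22.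
  by case: (comm_RB hb (conf_comm c)) => h; [rewrite h in R12 | rewrite h in nB12].
- case/and4P: hcyc => R10 R21 R32 hp; case/and5P: hall => n00 n11 n22 n33 nt.
  have h3 : 2 < n by move: hs; rewrite !ltnS; apply: leq_trans.
  have h2 : 1 < n by apply: ltnW.
  have ht : (size t).+1 < n by move: hs; rewrite !ltnS; apply: leq_trans.
  have nHn : forall u v, (u, v) \notin E -> (u, v) \notin E :\: F.
    by move=> u v h; rewrite inE (negbTE h) andbF.
  case: (boolP ((u1, v2) \in E)) => E12; last first.
    apply: (IH [:: (u0, v0), (u1, v2), (u3, v3) & t]) => //=.
      by rewrite n00 nHn // n33 nt.
    by rewrite R10 R32 hp.
  case: (boolP ((u3, v0) \in E)) => E30; last first.
    apply: (IH [:: (u3, v0); (u1, v1); (u2, v2)]) => //=.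
      by rewrite nHn // n11 n22.
    by rewrite R10 R21 R32.
  case: (boolP ((u1, v2) \in Er)) => R12.
    apply: (IH [:: (u1, v1); (u2, v2)]) => //=.
      by rewrite n11 n22.
    by rewrite R21 R12.
  case: (boolP ((u3, v0) \in Er)) => R30.
    apply: (IH [:: (u0, v0), (u3, v3) & t]) => //=.
      by rewrite n00 n33 nt.
    by rewrite R30 hp.
  by case: (L0 hb ha R10 R32 E12 E30 R12 R30).
Qed.

Lemma cycle_nth (T : Type) (e : rel T) (s : seq T) (x0 : T) :
  (forall i, i < size s -> e (nth x0 s i) (nth x0 s (i.+1 %% size s))) -> cycle e s.
Proof.
case: s => [//|x p] H /=; apply/(pathP x0) => i; rewrite size_rcons => hi.
have := H i hi; rewrite -rcons_cons nth_rcons /= hi nth_rcons.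
case: (ltnP i (size p)) => hip.
  by rewrite modn_small.
have -> : i = size p by apply/eqP; rewrite eqn_leq hip -ltnS hi.
by rewrite eqxx modnn.
Qed.

Theorem lemma6 (U V : finType) (E F Er Eb : {set U * V}) :
  F \subset E ->
  is_bipartition E F Er Eb ->
  ABC_free E F Er Eb ->
  ~ alternating_cycle (E :\: F) Er.
Proof.
move=> hF hb ha [k [us [vs [hk _ _ hc]]]].
have k0 : 0 < k by apply: leq_trans hk.
pose i0 : 'I_k := Ordinal k0.
pose s := [seq (us i, vs i) | i <- enum 'I_k].
have ss : size s = k by rewrite size_map size_enum_ord.
have nth_s : forall j (hj : j < k), nth (us i0, vs i0) s j = (us (Ordinal hj), vs (Ordinal hj)).
  move=> j hj; rewrite (nth_map (Ordinal hj)) ?size_enum_ord //.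
  by have -> : nth (Ordinal hj) (enum 'I_k) j = Ordinal hj by apply/val_inj; rewrite /= nth_enum_ord.
apply: (nowalk hF hb ha (n := size s) (s := s)) => //.
- by rewrite ss.
- by apply/allP => p /mapP [i _ ->]; case: (hc i).
- apply: (cycle_nth (x0 := (us i0, vs i0))) => i; rewrite ss => hi.
  rewrite (nth_s i hi) (nth_s _ (ltn_pmod i.+1 k0)) /=.
  have -> : Ordinal (ltn_pmod i.+1 k0) = ordS (Ordinal hi) by apply/val_inj.
  by case: (hc (Ordinal hi)).
Qed.
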